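(* Let $N\ge 2$ and $0<\gamma_1\le\dots\le\gamma_N$, and let $S$ be the star centered at vertex $1$. Then for every spanning tree $T'$ on $\{1,\dots,N\}$, $$R_{\mathrm s}(S)-R_{\mathrm s}(T')\le \frac{1}{2}\log_2\!\Big(\Big(\frac{\gamma_N(1+2\gamma_1)}{\gamma_1(1+2\gamma_N)}\Big)^{N}\Big),$$ and consequently $\sup_{T'}\big(R_{\mathrm s}(S)-R_{\mathrm s}(T')\big)\to 0$ as $\gamma_1\to\infty$ (with $N$ fixed and $\gamma_1\le\dots\le\gamma_N$).
   Context: For distinct $i,j$ put $\varphi(i,j)=\log_2\!\big(\gamma_i+\frac{\gamma_i}{\gamma_i+\gamma_j}\big)$. For a spanning tree $T$ on $\{1,\dots,N\}$ with neighbor sets $A_i^T$, define $R_{\mathrm s}(T)=\frac{1}{2(N-1)}\sum_{i=1}^N \min_{j\in A_i^T}\varphi(i,j)$. *)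

(* Defs.v *)
From Stdlib Require Import Reals.
From mathcomp Require Import all_boot.
Set Implicit Arguments. Unset Strict Implicit. Unset Printing Implicit Defensive.
Local Open Scope R_scope.

(* Vertices {1,...,N} are represented by 'I_N; paper vertex i+1 <-> ordinal i.
   gamma : nat -> R is indexed 1-based as in the paper, so ordinal i has
   weight gamma (i.+1). *)

Definition log2 (x : R) : R := (ln x / ln 2).

Definition phi (gamma : nat -> R) (N : nat) (i j : 'I_N) : R :=
  log2 (gamma i.+1 + gamma i.+1 / (gamma i.+1 + gamma j.+1)).

Definition is_spanning_tree (N : nat) (e : rel 'I_N) : Prop :=
  symmetric e /\ irreflexive e /\
  (forall x y : 'I_N, connect e x y) /\
  #|[set p : 'I_N * 'I_N | ((val p.1 < val p.2)%N && e p.1 p.2)]| = (N - 1)%N.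

Definition nbrs (N : nat) (e : rel 'I_N) (i : 'I_N) : seq 'I_N :=
  [seq j <- enum 'I_N | e i j].

(* minimum of a nonempty list of reals (0 on the empty list, never used
   for trees with N >= 2) *)
Definition minlist (s : seq R) : R :=
  match s with [::] => 0 | x :: s' => foldr Rmin x s' end.

Definition Rs (gamma : nat -> R) (N : nat) (e : rel 'I_N) : R :=
  (/ (2 * INR (N - 1)) *
   \big[Rplus/0]_(i < N) minlist [seq phi gamma i j | j <- nbrs e i]).

Definition star (N : nat) : rel 'I_N :=
  fun i j => ((val i == 0%N) && (val j != 0%N)) || ((val j == 0%N) && (val i != 0%N)).

Definition admissible (N : nat) (gamma : nat -> R) : Prop :=
  (0 < gamma 1%N) /\
  (forall i j : nat, (1 <= i)%N -> (i <= j)%N -> (j <= N)%N -> (gamma i <= gamma j)).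
Arguments star N : clear implicits.

(* Main.v *)
Require Import Defs.
From Stdlib Require Import Reals Lra Psatz.
From mathcomp Require Import all_boot.
Local Open Scope R_scope.

Lemma ln_le' x y : 0 < x -> x <= y -> ln x <= ln y.
Proof. intros Hx [H|H]; [left; apply ln_increasing; auto | subst; lra]. Qed.

Lemma ln_le_xm1 x : 0 < x -> ln x <= x - 1.
Proof.
intros Hx. rewrite <- (ln_exp (x - 1)). apply ln_le'; auto.
generalize (exp_ineq1_le (x-1)); lra.
Qed.

Lemma mono_expr t s1 s2 : 0 < t -> 0 < s1 -> s1 <= s2 ->
  t + t / (t + s2) <= t + t / (t + s1).
Proof.
intros Ht H1 H2. apply Rplus_le_compat_l. unfold Rdiv.
apply Rmult_le_compat_l; [lra|]. apply Rinv_le_contravar; lra.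
Qed.

Lemma core_ineq a b t : 0 < a -> a <= b -> a <= t ->
  ln (t + t / (t + a)) - ln (t + t / (t + b)) <=
  ln ((b * (1 + 2 * a)) / (a * (1 + 2 * b))).
Proof.
intros Ha Hab Hat. assert (Ht: 0 < t) by lra.
assert (HA : 0 < t + t / (t + a)).
{ assert (0 < t / (t+a)) by (apply Rdiv_lt_0_compat; lra). lra. }
assert (HB : 0 < t + t / (t + b)).
{ assert (0 < t / (t+b)) by (apply Rdiv_lt_0_compat; lra). lra. }
assert (Hp : 0 < b * (1 + 2 * a)) by nra.
assert (Hq : 0 < a * (1 + 2 * b)) by nra.
assert (E : (t + t / (t + b)) * (b * (1 + 2 * a)) - (t + t / (t + a)) * (a * (1 + 2 * b))
   = t * (b - a) * (t*t + (a+b+1)*t - a*b) / ((t+a)*(t+b))).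
{ field; lra. }
assert (Hd : 0 <= t * (b - a) * (t*t + (a+b+1)*t - a*b) / ((t+a)*(t+b))).
{ apply Rmult_le_pos; [|left; apply Rinv_0_lt_compat; nra].
  apply Rmult_le_pos; [nra|]. nra. }
assert (Hle : (t + t / (t + a)) * (a * (1 + 2 * b)) <= (t + t / (t + b)) * (b * (1 + 2 * a))) by lra.
apply ln_le' in Hle; [|nra].
rewrite !ln_mult in Hle; try lra.
assert (Hi : 0 < / (a * (1 + 2 * b))) by (apply Rinv_0_lt_compat; lra).
unfold Rdiv at 3. rewrite (ln_mult _ _ Hp Hi) (ln_Rinv _ Hq).
rewrite (ln_mult a) ?(ln_mult b); try lra.
Qed.

Lemma X_ge1 a b : 0 < a -> a <= b -> 1 <= (b * (1 + 2 * a)) / (a * (1 + 2 * b)).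
Proof.
intros. apply (Rmult_le_reg_r (a * (1 + 2 * b))); [nra|].
unfold Rdiv; rewrite Rmult_assoc Rinv_l; nra.
Qed.

Lemma X_le a b : 0 < a -> a <= b -> (b * (1 + 2 * a)) / (a * (1 + 2 * b)) - 1 <= / (2 * a).
Proof.
intros. assert (E: (b * (1 + 2 * a)) / (a * (1 + 2 * b)) - 1 = (b - a) / (a * (1 + 2*b))) by (field; nra).
rewrite E. apply (Rmult_le_reg_r (2 * a * (a * (1 + 2 * b)))); [nra|].
field_simplify; try nra.
Qed.
Lemma foldr_min_le (T : eqType) (f : T -> R) x (s : seq T) :
  foldr Rmin x (map f s) <= x /\ forall j, j \in s -> foldr Rmin x (map f s) <= f j.
Proof.
elim: s => [|y s [IH1 IH2]] /=; first by split; [lra|].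
split; first by apply: Rle_trans (Rmin_r _ _) IH1.
move=> j; rewrite in_cons => /orP [/eqP ->|Hj]; first by apply: Rmin_l.
by apply: Rle_trans (Rmin_r _ _) (IH2 j Hj).
Qed.

Lemma minlist_le (T : eqType) (f : T -> R) (s : seq T) j :
  j \in s -> minlist (map f s) <= f j.
Proof.
case: s => [|y s] //= Hj. have [H1 H2] := @foldr_min_le T f (f y) s.
move: Hj; rewrite in_cons => /orP [/eqP ->|Hj]; first exact H1.
exact: H2.
Qed.

Lemma foldr_min_ge (T : eqType) (f : T -> R) c x (s : seq T) :
  c <= x -> (forall j, j \in s -> c <= f j) -> c <= foldr Rmin x (map f s).
Proof.
elim: s => [|y s IH] /= Hx Hall; first exact Hx.
apply Rmin_glb; first by apply: Hall; rewrite in_cons eqxx.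
apply: IH => // j Hj; apply: Hall; by rewrite in_cons Hj orbT.
Qed.

Lemma minlist_ge (T : eqType) (f : T -> R) (s : seq T) c :
  s <> [::] -> (forall j, j \in s -> c <= f j) -> c <= minlist (map f s).
Proof.
case: s => [|y s] //= _ Hall. apply: foldr_min_ge.
  by apply: Hall; rewrite in_cons eqxx.
move=> j Hj; apply: Hall; by rewrite in_cons Hj orbT.
Qed.

Lemma mem_nbrs N (e : rel 'I_N) i j : (j \in nbrs e i) = e i j.
Proof. by rewrite /nbrs mem_filter mem_enum andbT. Qed.

Lemma tree_nbr N (e : rel 'I_N) (i : 'I_N) : (2 <= N)%N -> is_spanning_tree e ->
  exists j, e i j.
Proof.
move=> HN [_ [_ [Hc _]]].
have [k Hk] : exists k : 'I_N, k != i.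
  case: (eqVneq (val i) 0%N) => Hi.
    have H1 : (1 < N)%N by [].
    exists (Ordinal H1); apply/negP => /eqP Hk; move: Hi; rewrite -Hk.
    done.
  have H0 : (0 < N)%N by apply: leq_trans HN.
  exists (Ordinal H0); apply/negP => /eqP Hk; move: Hi; rewrite -Hk. done.
move/connectP: (Hc i k) => [p Hp Hl].
case: p Hp Hl => [|z p] /=.
  by move=> _ Hl; move: Hk; rewrite Hl eqxx.
by move=> /andP [Hz _] _; exists z.
Qed.

Lemma sum_diff_le N (F G : 'I_N -> R) c :
  (forall i, F i - G i <= c) ->
  \big[Rplus/0]_(i < N) F i - \big[Rplus/0]_(i < N) G i <= INR N * c.
Proof.
move=> H.
have -> : INR N * c = \big[Rplus/0]_(i < N) c.
  rewrite big_const_ord. elim: N {F G H} => [|n IH] /=; first lra.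
  rewrite -IH. change (INR n.+1 * c = c + INR n * c). rewrite S_INR; lra.
apply: (big_rec3 (fun y1 y2 y3 => y1 - y2 <= y3)); first lra.
move=> i y1 y2 y3 _ Hy. have := H i. lra.
Qed.

Lemma log2_le x y : 0 < x -> x <= y -> log2 x <= log2 y.
Proof.
move=> Hx Hxy. rewrite /log2 /Rdiv. apply: Rmult_le_compat_r; last exact: ln_le'.
left; apply: Rinv_0_lt_compat. have := ln_lt_2. lra.
Qed.

Lemma expr_pos t s : 0 < t -> 0 < s -> 0 < t + t / (t + s).
Proof. move=> Ht Hs. have : 0 < t / (t + s) by apply: Rdiv_lt_0_compat; lra. lra. Qed.

Lemma star_nbr N (i : 'I_N) : (2 <= N)%N -> exists j, star N i j.
Proof.
move=> HN. rewrite /star.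
case: (eqVneq (val i) 0%N) => Hi.
  have H1 : (1 < N)%N by [].
  by exists (Ordinal H1).
have H0 : (0 < N)%N by apply: leq_trans HN.
by exists (Ordinal H0).
Qed.

Lemma part1 (N : nat) (gamma : nat -> R) : (2 <= N)%N -> admissible N gamma ->
     forall T' : rel 'I_N, is_spanning_tree T' ->
       Rs gamma (star N) - Rs gamma T' <=
        / 2 * log2 (((gamma N * (1 + 2 * gamma 1%N)) /
                     (gamma 1%N * (1 + 2 * gamma N))) ^ N).
Proof.
move=> HN [Ha Hmono] T' HT.
have Hg : forall i : 'I_N, gamma 1%N <= gamma i.+1 /\ gamma i.+1 <= gamma N.
  move=> i; split; apply: Hmono => //; exact: ltn_ord.
have Hab : gamma 1%N <= gamma N by apply: Hmono => //; apply: leq_trans HN.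
set a := gamma 1%N in Ha Hg Hab *. set b := gamma N in Hg Hab *.
set X := (b * (1 + 2 * a)) / (a * (1 + 2 * b)).
have Hl2 : 0 < ln 2 by have := ln_lt_2; lra.
have HX1 : 1 <= X by apply: (@X_ge1 a b).
set c := ln X / ln 2.
have Hc : 0 <= c.
  rewrite /c /Rdiv; apply: Rmult_le_pos; last by left; apply: Rinv_0_lt_compat.
  rewrite -ln_1; apply: ln_le'; lra.
have Hterm : forall i : 'I_N,
    minlist [seq phi gamma i j | j <- nbrs (star N) i] -
    minlist [seq phi gamma i j | j <- nbrs T' i] <= c.
  move=> i. have [Hti1 Hti2] := Hg i.
  have Ht : 0 < gamma i.+1 by lra.
  have [j Hj] := @star_nbr N i HN.
  have [Hj1 Hj2] := Hg j.
  have H1 : minlist [seq phi gamma i j | j <- nbrs (star N) i] <=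
            log2 (gamma i.+1 + gamma i.+1 / (gamma i.+1 + a)).
    apply: Rle_trans (@minlist_le _ (phi gamma i) (nbrs (star N) i) j _) _; first by rewrite mem_nbrs.
    rewrite /phi; apply: log2_le; first by apply: expr_pos; lra.
    apply: mono_expr; lra.
  have [k Hk] := @tree_nbr N T' i HN HT.
  have H2 : log2 (gamma i.+1 + gamma i.+1 / (gamma i.+1 + b)) <=
            minlist [seq phi gamma i j | j <- nbrs T' i].
    apply: minlist_ge.
      move=> Hn; have Hk' : k \in nbrs T' i by rewrite mem_nbrs.
      by rewrite Hn in Hk'.
    move=> j' _. have [Hj'1 Hj'2] := Hg j'.
    rewrite /phi; apply: log2_le; first by apply: expr_pos; lra.
    apply: mono_expr; lra.
  have H3 := @core_ineq a b (gamma i.+1) Ha Hab Hti1.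
  have H4 : log2 (gamma i.+1 + gamma i.+1 / (gamma i.+1 + a)) -
            log2 (gamma i.+1 + gamma i.+1 / (gamma i.+1 + b)) <= c.
    rewrite /log2 /c /Rdiv -Rmult_minus_distr_r.
    apply: Rmult_le_compat_r; first by left; apply: Rinv_0_lt_compat.
    exact H3.
  lra.
have Hsum := @sum_diff_le N _ _ c Hterm.
have HX0 : 0 < X by lra.
have -> : log2 (X ^ N) = INR N * c.
  by rewrite /log2 ln_pow // /c /Rdiv Rmult_assoc.
rewrite /Rs.
set SS := \big[Rplus/0]_(i < N) _ in Hsum *.
set ST := \big[Rplus/0]_(i < N) _ in Hsum *.
have Hk : 1 <= INR (N - 1).
  have : (1 <= N - 1)%coq_nat by apply/leP; rewrite subn_gt0.
  move/le_INR. by [].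
have Hk0 : 0 < INR (N - 1) by lra.
have HNc : 0 <= INR N * c by apply: Rmult_le_pos => //; apply: pos_INR.
have E : / (2 * INR (N - 1)) * SS - / (2 * INR (N - 1)) * ST =
         / (2 * INR (N - 1)) * (SS - ST) by ring.
rewrite E.
apply: Rle_trans (_ : / (2 * INR (N - 1)) * (INR (N - 1) * (INR N * c)) <= _).
  apply: Rmult_le_compat_l; first by left; apply: Rinv_0_lt_compat; lra.
  nra.
have -> : / (2 * INR (N - 1)) * (INR (N - 1) * (INR N * c)) = / 2 * (INR N * c).
  by field; lra.
lra.
Qed.

Theorem mainTheorem8 :
  (forall (N : nat) (gamma : nat -> R), (2 <= N)%N -> admissible N gamma ->
     forall T' : rel 'I_N, is_spanning_tree T' ->
       Rs gamma (star N) - Rs gamma T' <=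
        / 2 * log2 (((gamma N * (1 + 2 * gamma 1%N)) /
                     (gamma 1%N * (1 + 2 * gamma N))) ^ N))
  /\
  (forall N : nat, (2 <= N)%N ->
     forall eps : R, 0 < eps ->
       exists M : R, forall gamma : nat -> R, admissible N gamma -> M <= gamma 1%N ->
         forall T' : rel 'I_N, is_spanning_tree T' ->
           Rs gamma (star N) - Rs gamma T' <= eps).
Proof.
split; first exact: part1.
move=> N HN eps Heps.
have Hl2 : 0 < ln 2 by have := ln_lt_2; lra.
have HNp : 0 <= INR N by apply: pos_INR.
exists (INR N / (4 * eps * ln 2) + 1).
move=> gamma Hadm HM T' HT.
apply: Rle_trans (@part1 N gamma HN Hadm T' HT) _.
case: Hadm => Ha Hmono.
have Hab : gamma 1%N <= gamma N by apply: Hmono => //; apply: leq_trans HN.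
set a := gamma 1%N in Ha Hab HM *. set b := gamma N in Hab *.
have HX1 := @X_ge1 a b Ha Hab.
have HXl := @X_le a b Ha Hab.
set X := (b * (1 + 2 * a)) / (a * (1 + 2 * b)) in HX1 HXl *.
have HlX : ln X <= / (2 * a).
  have H := ln_le_xm1 X. have := H ltac:(lra). lra.
rewrite /log2 ln_pow; last lra.
have Hdiv : 0 <= INR N / (4 * eps * ln 2).
  apply: Rmult_le_pos => //; left; apply: Rinv_0_lt_compat; nra.
have E : / 2 * (INR N * ln X / ln 2) <= / 2 * (INR N * / (2 * a) / ln 2).
  apply: Rmult_le_compat_l; first lra.
  rewrite /Rdiv. apply: Rmult_le_compat_r; first by left; apply: Rinv_0_lt_compat.
  by apply: Rmult_le_compat_l.
apply: Rle_trans E _.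
have -> : / 2 * (INR N * / (2 * a) / ln 2) = INR N / (4 * eps * ln 2) * eps / a.
  field; lra.
apply: (Rmult_le_reg_r a); first lra.
have -> : INR N / (4 * eps * ln 2) * eps / a * a = INR N / (4 * eps * ln 2) * eps.
  field; lra.
nra.
Qed.
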